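(* For real $z<1$, $z\ne0$, \[ -\log(1-z)=\cfrac{2z}{(2-z)-\cfrac{z^2}{3(2-z)-\cfrac{4z^2}{5(2-z)-\cfrac{9z^2}{7(2-z)-\cdots}}}}, \] i.e. the continued fraction with $a(0)=0$, $a(n)=(2n-1)(2-z)$ for $n\ge1$, $b(0)=2z$, $b(n)=-n^2z^2$ for $n\ge1$. Moreover, with $p(n)/q(n)$ its $n$-th convergent, as $n\to\infty$ \[ -\log(1-z)-\frac{p(n)}{q(n)}\sim\frac{2\pi}{\big((1+\sqrt{1-z})^2/z\big)^{2n+1}}. \]
   Context: For sequences $a(n),b(n)$, the continued fraction is $a(0)+\cfrac{b(0)}{a(1)+\cfrac{b(1)}{a(2)+\cdots}}$ and its $n$-th convergent $p(n)/q(n)$ is the truncation ending with $b(n-1)/a(n)$. *)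

(* Defs.v *)
From Stdlib Require Import Reals.
From Coquelicot Require Import Coquelicot.
Open Scope R_scope.

(* Convergents p(n)/q(n) of a(0) + b(0)/(a(1) + b(1)/(a(2) + ...)) via the
   standard (Wallis) recurrences with p(-1)=1, q(-1)=0, p(0)=a(0), q(0)=1:
   p(n) = a(n) p(n-1) + b(n-1) p(n-2),  q(n) = a(n) q(n-1) + b(n-1) q(n-2). *)
Fixpoint cf_p (a b : nat -> R) (n : nat) : R :=
  match n with
  | O => a O
  | S O => a 1%nat * a O + b O
  | S (S m as n1) => a (S n1) * cf_p a b n1 + b n1 * cf_p a b m
  end.

Fixpoint cf_q (a b : nat -> R) (n : nat) : R :=
  match n with
  | O => 1
  | S O => a 1%nat
  | S (S m as n1) => a (S n1) * cf_q a b n1 + b n1 * cf_q a b m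
  end.

Definition log_a (z : R) (n : nat) : R :=
  match n with
  | O => 0
  | S _ => (2 * INR n - 1) * (2 - z)
  end.

Definition log_b (z : R) (n : nat) : R :=
  match n with
  | O => 2 * z
  | S _ => - (INR n ^ 2) * z ^ 2
  end.

(* Main.v *)
Require Import Defs.
From Stdlib Require Import Reals Lra Lia Factorial.
From Coquelicot Require Import Coquelicot.
From Stdlib Require Import ssreflect.
Open Scope R_scope.


Definition Iw (m : nat) := RInt (fun x => sin x ^ m) 0 (PI/2).

Lemma ex_RInt_sinpow m a b : ex_RInt (fun x => sin x ^ m) a b.
Proof.
  apply: ex_RInt_continuous. intros z _.
  apply: ex_derive_continuous. auto_derive. auto.
Qed.

Lemma Iw_rec m : INR (S (S m)) * Iw (S (S m)) = INR (S m) * Iw m.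
Proof.
  assert (H : is_RInt (fun x => INR (S m) * sin x ^ m - INR (S (S m)) * sin x ^ (S (S m))) 0 (PI/2)
     (minus ((fun x => cos x * sin x ^ (S m)) (PI/2)) ((fun x => cos x * sin x ^ (S m)) 0))).
  { apply: (is_RInt_derive (fun x => cos x * sin x ^ (S m))) .
    - intros x _. auto_derive. auto.
      pose proof (sin2_cos2 x). unfold Rsqr in H.
      change (match m with 0%nat => 1 | S _ => INR m + 1 end) with (INR (S m)).
      replace (sin x ^ S (S m)) with (sin x * (sin x * sin x ^ m)) by (simpl; ring).
      replace (cos x * cos x) with (1 - sin x * sin x) by lra.
      rewrite !S_INR. 
      replace (cos x * (1 * cos x * ((INR m + 1) * sin x ^ m))) with ((INR m + 1) * sin x ^ m * (cos x * cos x)) by ring.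
      replace (cos x * cos x) with (1 - sin x * sin x) by lra.
      ring.
    - intros x _. apply: ex_derive_continuous. auto_derive. auto. }
  assert (H2 : is_RInt (fun x => INR (S m) * sin x ^ m - INR (S (S m)) * sin x ^ (S (S m))) 0 (PI/2)
     (INR (S m) * Iw m - INR (S (S m)) * Iw (S (S m)))).
  { apply: is_RInt_minus; apply: is_RInt_scal; apply: RInt_correct; apply ex_RInt_sinpow. }
  have E1 := is_RInt_unique _ _ _ _ H.
  have E2 := is_RInt_unique _ _ _ _ H2.
  rewrite E1 in E2. rewrite cos_PI2 sin_0 in E2. 
  rewrite /minus /plus /opp /= in E2. change (match m with 0%nat => 1 | S _ => INR m + 1 end) with (INR (S m)) in E2. rewrite (S_INR (S m)). nra.
Qed.

Lemma Iw_0 : Iw 0 = PI/2.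
Proof. rewrite /Iw /=. rewrite RInt_const /scal /= /mult /=. lra. Qed.

Lemma Iw_1 : Iw 1 = 1.
Proof.
  have H : is_RInt (fun x => sin x ^ 1) 0 (PI/2) (minus ((fun x => - cos x) (PI/2)) ((fun x => - cos x) 0)).
  { apply: (is_RInt_derive (fun x => - cos x)).
    - intros x _. auto_derive. auto. ring.
    - intros x _. apply: ex_derive_continuous. auto_derive. auto. }
  rewrite /Iw (is_RInt_unique _ _ _ _ H) cos_PI2 cos_0 /minus /plus /opp /=. lra.
Qed.

Lemma Iw_decr m : Iw (S m) <= Iw m.
Proof.
  apply: RInt_le. pose proof PI_RGT_0; lra. apply ex_RInt_sinpow. apply ex_RInt_sinpow.
  intros x Hx. pose proof PI_RGT_0.
  have h1 : 0 <= sin x by apply sin_ge_0; lra.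
  have h2 : sin x <= 1 by (have := SIN_bound x; lra).
  have h3 : 0 <= sin x ^ m by apply pow_le.
  simpl. nra.
Qed.

Fixpoint cc (n : nat) : R :=
  match n with O => 1 | S m => cc m * (2 * INR m + 1) / (2 * INR m + 2) end.

Lemma cc_pos n : 0 < cc n.
Proof.
  induction n as [|n IH]; simpl. lra.
  have := pos_INR n. intros. apply Rdiv_lt_0_compat; nra.
Qed.

Lemma cc_S n : cc (S n) = cc n * (2 * INR n + 1) / (2 * INR n + 2).
Proof. reflexivity. Qed.

Lemma Iw_even n : Iw (2 * n) = cc n * (PI / 2).
Proof.
  induction n as [|n IH]. simpl. rewrite Iw_0. ring.
  replace (2 * S n)%nat with (S (S (2 * n))) by lia.
  have := Iw_rec (2 * n). rewrite IH cc_S. 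
  rewrite !S_INR mult_INR. simpl (INR 2). intros E.
  have := pos_INR n. intros.
  apply (Rmult_eq_reg_l (2 * INR n + 1 + 1)). rewrite E. field. lra. lra.
Qed.

Lemma Iw_odd n : Iw (2 * n + 1) = 1 / ((2 * INR n + 1) * cc n).
Proof.
  have hc := cc_pos n.
  induction n as [|n IH]. simpl. rewrite Iw_1. field.
  replace (2 * S n + 1)%nat with (S (S (2 * n + 1))) by lia.
  have := Iw_rec (2 * n + 1). rewrite (IH (cc_pos n)) cc_S.
  rewrite !S_INR plus_INR mult_INR. simpl (INR 2). simpl (INR 1). intros E.
  have := pos_INR n. have := cc_pos n. intros.
  apply (Rmult_eq_reg_l (2 * INR n + 1 + 1 + 1)). rewrite E. field. 
  repeat split; lra. lra.
Qed.
Lemma lim_inv_n a : 0 < a -> is_lim_seq (fun n => / (INR n + a)) 0.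
Proof.
  intros Ha.
  have H : is_lim_seq (fun n => INR n + a) p_infty.
  { apply: (is_lim_seq_le_p_loc INR). exists 0%nat. intros n _. lra. apply is_lim_seq_INR. }
  have := is_lim_seq_inv _ _ H. simpl. intros H2. apply H2. discriminate.
Qed.

Lemma wallis_lo n : 2 / ((2 * INR n + 1) * PI) <= cc n ^ 2.
Proof.
  have h1 := Iw_decr (2 * n). rewrite Iw_even in h1.
  replace (S (2 * n)) with (2 * n + 1)%nat in h1 by lia. rewrite Iw_odd in h1.
  have := cc_pos n. have := pos_INR n. have := PI_RGT_0. intros.
  apply (Rmult_le_reg_r ((2 * INR n + 1) * PI / 2)). nra.
  replace (2 / ((2 * INR n + 1) * PI) * ((2 * INR n + 1) * PI / 2)) with 1 by (field; nra).
  apply (Rmult_le_reg_r (/ ((2 * INR n + 1) * cc n))). 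
  apply Rinv_0_lt_compat; nra.
  replace (1 * / ((2 * INR n + 1) * cc n)) with (1 / ((2 * INR n + 1) * cc n)) by (field; nra).
  replace (cc n ^ 2 * ((2 * INR n + 1) * PI / 2) * / ((2 * INR n + 1) * cc n)) with (cc n * (PI/2)) by (field; nra).
  exact h1.
Qed.

Lemma wallis_up n : INR n * cc n ^ 2 <= / PI.
Proof.
  have := PI_RGT_0. intros.
  destruct n as [|m]. simpl. have := Rinv_0_lt_compat PI H. lra.
  have h1 := Iw_decr (S (2 * m)). replace (S (S (2 * m))) with (2 * S m)%nat in h1 by lia.
  rewrite Iw_even in h1.
  replace (S (2 * m)) with (2 * m + 1)%nat in h1 by lia. rewrite Iw_odd in h1.
  rewrite cc_S in h1 |- *. have := cc_pos m. have := pos_INR m. intros.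
  rewrite S_INR.
  set c := cc m * (2 * INR m + 1) / (2 * INR m + 2) in h1 *.
  have hc : 0 < c by (apply Rdiv_lt_0_compat; nra).
  have e : (2 * INR m + 1) * cc m = (2 * INR m + 2) * c by (rewrite /c; field; lra).
  rewrite e in h1. clearbody c.
  have h0 : 0 <= (2*INR m+2)*c by (have := pos_INR m; nra).
  have h2 := Rmult_le_compat_r ((2*INR m+2)*c) _ _ h0 h1.
  replace (1 / ((2 * INR m + 2) * c) * ((2 * INR m + 2) * c)) with 1 in h2 by (field; nra).
  have h3 : (INR m + 1) * c ^ 2 * PI <= 1 by nra.
  have h4 := Rmult_le_compat_r (/ PI) _ _ (Rlt_le _ _ (Rinv_0_lt_compat _ H)) h3.
  replace ((INR m + 1) * c ^ 2 * PI * / PI) with ((INR m + 1) * c ^ 2) in h4 by (field; lra).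
  lra.
Qed.

Lemma wallis : is_lim_seq (fun n => INR n * cc n ^ 2) (/ PI).
Proof.
  have hp := PI_RGT_0.
  apply: (is_lim_seq_le_le (fun n => / PI * (1 - / 2 * / (INR n + / 2))) _ (fun _ => / PI)).
  - intros n. split; [|apply wallis_up].
    have := wallis_lo n. have := pos_INR n. intros.
    replace (/ PI * (1 - / 2 * / (INR n + / 2))) with (INR n * (2 / ((2 * INR n + 1) * PI))) by (field; lra).
    apply Rmult_le_compat_l; lra.
  - have L : is_lim_seq (fun n => / PI * (1 - / 2 * / (INR n + / 2))) (/ PI * (1 - / 2 * 0)).
    2: { replace (/ PI * (1 - / 2 * 0)) with (/ PI) in L by ring. exact L. }
    apply: is_lim_seq_mult'. apply is_lim_seq_const.
    apply: is_lim_seq_minus'. apply is_lim_seq_const.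
    apply: is_lim_seq_mult'. apply is_lim_seq_const. apply lim_inv_n. lra.
  - apply is_lim_seq_const.
Qed.


Lemma sum_mul_l (f : nat -> R) x N : sum_f_R0 (fun i => x * f i) N = x * sum_f_R0 f N.
Proof. rewrite scal_sum. apply sum_eq => i _. ring. Qed.

Definition conv (f g : nat -> R) (n : nat) := sum_f_R0 (fun j => f j * g (n - j)%nat) n.

Section Conv.
Variables (A B : R) (V W : nat -> R).
Hypothesis hV : forall j, INR (S j) * V (S j) = A * ((INR j + /2) * V j).
Hypothesis hW : forall j, INR (S j) * W (S j) = B * ((INR j + /2) * W j).

Let X n := conv (fun j => INR j * V j) W n.
Let Y n := conv V (fun k => INR k * W k) n.
Let U n := conv V W n.

Lemma conv_X n : X (S n) = A * (X n + / 2 * U n).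
Proof.
  rewrite /X /U /conv decomp_sum; [|lia]. simpl pred.
  replace (INR 0 * V 0%nat * W (S n - 0)%nat) with 0 by (simpl; ring).
  rewrite Rplus_0_l.
  rewrite (sum_eq _ (fun j => A * (INR j * V j * W (n - j)%nat + / 2 * (V j * W (n - j)%nat)))).
  2: { intros i _. replace (S n - S i)%nat with (n - i)%nat by lia. rewrite hV. ring. }
  rewrite sum_mul_l sum_plus sum_mul_l. reflexivity.
Qed.

Lemma conv_Y n : Y (S n) = B * (Y n + / 2 * U n).
Proof.
  rewrite /Y /U /conv tech5.
  replace (S n - S n)%nat with 0%nat by lia.
  replace (V (S n) * (INR 0 * W 0%nat)) with 0 by (simpl; ring).
  rewrite Rplus_0_r.
  rewrite (sum_eq _ (fun j => B * (V j * (INR (n - j) * W (n - j)%nat) + / 2 * (V j * W (n - j)%nat)))).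
  2: { intros i Hi. replace (S n - i)%nat with (S (n - i)) by lia. 
       rewrite hW. ring. }
  rewrite sum_mul_l sum_plus sum_mul_l. reflexivity.
Qed.

Lemma conv_XY n : X n + Y n = INR n * U n.
Proof.
  rewrite /X /Y /U /conv -sum_plus -sum_mul_l.
  apply sum_eq => i Hi. rewrite minus_INR; [ring|lia].
Qed.

Lemma conv_rec n : INR (S (S n)) * U (S (S n)) =
   (2 * INR n + 3) * ((A + B) / 2) * U (S n) - INR (S n) * (A * B) * U n.
Proof.
  have e2 := conv_XY (S (S n)). have e1 := conv_XY (S n). have e0 := conv_XY n.
  have x2 := conv_X (S n). have y2 := conv_Y (S n).
  have x1 := conv_X n. have y1 := conv_Y n.
  rewrite -e2 x2 y2.
  have key : B * X (S n) + A * Y (S n) = INR (S n) * (A * B) * U n.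
  { rewrite x1 y1 S_INR. have ex : X n = INR n * U n - Y n by lra. rewrite ex. field. }
  rewrite !S_INR in e1 key |- *.
  have e1' : X (S n) = (INR n + 1) * U (S n) - Y (S n) by lra.
  rewrite e1'. rewrite e1' in key.
  nra.
Qed.
End Conv.


Lemma cf_p_SS a b n : cf_p a b (S (S n)) = a (S (S n)) * cf_p a b (S n) + b (S n) * cf_p a b n.
Proof. reflexivity. Qed.
Lemma cf_q_SS a b n : cf_q a b (S (S n)) = a (S (S n)) * cf_q a b (S n) + b (S n) * cf_q a b n.
Proof. reflexivity. Qed.

Section Z.
Variables z s : R.
Hypothesis hs : s * s = 1 - z.

Definition AA := (1 + s) ^ 2.
Definition BB := (1 - s) ^ 2.
Definition VV j := cc j * AA ^ j.
Definition WW j := cc j * BB ^ j.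
Definition UU n := conv WW VV n.

Lemma cc_rec_gen (T : R) j : INR (S j) * (cc (S j) * T ^ (S j)) = T * ((INR j + /2) * (cc j * T ^ j)).
Proof. rewrite cc_S S_INR /=. have := pos_INR j. intros. field. lra. Qed.

Lemma UU_rec n : INR (S (S n)) * UU (S (S n)) =
   (2 * INR n + 3) * ((AA + BB) / 2) * UU (S n) - INR (S n) * (AA * BB) * UU n.
Proof. rewrite (Rplus_comm AA BB) (Rmult_comm AA BB). apply conv_rec; intros; apply cc_rec_gen. Qed.

Lemma AB_sum : (AA + BB) / 2 = 2 - z.
Proof. rewrite /AA /BB. nra. Qed.
Lemma AB_prod : AA * BB = z ^ 2.
Proof. rewrite /AA /BB. replace z with (1 - s * s) by lra. ring. Qed.

Lemma q_eq n : cf_q (log_a z) (log_b z) n = INR (fact n) * UU n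
            /\ cf_q (log_a z) (log_b z) (S n) = INR (fact (S n)) * UU (S n).
Proof.
  induction n as [|n [IH1 IH2]].
  - split.
    + rewrite /UU /conv /= /VV /WW /=. ring.
    + rewrite /UU /conv /= /VV /WW /=. rewrite -AB_sum /=. field.
  - split; [exact IH2|].
    rewrite cf_q_SS IH1 IH2.
    have hU := UU_rec n. rewrite AB_sum AB_prod in hU.
    have e : UU (S (S n)) = ((2 * INR n + 3) * (2 - z) * UU (S n) - INR (S n) * z ^ 2 * UU n) / INR (S (S n)).
    { rewrite -hU. field. apply not_0_INR. lia. }
    rewrite e. 
    replace (fact (S (S n))) with ((S (S n)) * (S n) * fact n)%nat by (simpl; lia).
    replace (fact (S n)) with ((S n) * fact n)%nat by (simpl; lia).
    rewrite !mult_INR /log_a /log_b !S_INR. field. have := pos_INR n. lra.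
Qed.

Lemma wronski n : cf_p (log_a z) (log_b z) (S n) * cf_q (log_a z) (log_b z) n
                - cf_p (log_a z) (log_b z) n * cf_q (log_a z) (log_b z) (S n)
                = 2 * z ^ (2 * n + 1) * INR (fact n) ^ 2.
Proof.
  induction n as [|n IH].
  - simpl. ring.
  - rewrite cf_p_SS cf_q_SS.
    replace (fact (S n)) with ((S n) * fact n)%nat by (simpl; lia).
    replace (2 * S n + 1)%nat with (2 * n + 1 + 2)%nat by lia.
    rewrite mult_INR pow_add.
    have e : forall a b c d e f : R, (a * c + e * d) * b - c * (a * b + e * f) = - e * (c * f - d * b).
    { intros. ring. }
    rewrite e IH /log_b. ring.
Qed.
End Z.


Section I.
Variable z : R.
Hypothesis hz1 : z < 1.

Definition fI n u := (u * (1 - u)) ^ n / (1 - z * u) ^ (S n).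
Definition Iint n := RInt (fI n) 0 1.

Lemma pos_v u : 0 <= u <= 1 -> 0 < 1 - z * u.
Proof. intros [h0 h1]. have : 0 <= u * (1 - z) by (apply Rmult_le_pos; lra). intros. destruct (Req_dec u 1) as [->|ne]; [lra|]. have : u < 1 by lra. intros; nra. Qed.

Lemma Rmin01 : Rmin 0 1 = 0. Proof. rewrite Rmin_left; lra. Qed.
Lemma Rmax01 : Rmax 0 1 = 1. Proof. rewrite Rmax_right; lra. Qed.

Lemma ex_RInt_fI n : ex_RInt (fI n) 0 1.
Proof.
  apply: ex_RInt_continuous. intros u. rewrite Rmin01 Rmax01 => Hu.
  have := pos_v u Hu. intros hv.
  apply: ex_derive_continuous. rewrite /fI. auto_derive.
  have hp : forall k, (1 + - (z*u))^k <> 0 by (intros; apply pow_nonzero; lra).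
  repeat split; try apply Rmult_integral_contrapositive_currified; auto; lra.
Qed.

Lemma Gder n u : 0 <= u <= 1 ->
  is_derive (fun u => (u * (1 - u)) ^ (S n) * (1 - 2 * u + z * u ^ 2) / (1 - z * u) ^ (S (S n))) u
   (INR (S (S n)) * z ^ 2 * fI (S (S n)) u - (2 * INR n + 3) * (2 - z) * fI (S n) u + INR (S n) * fI n u).
Proof.
  intros Hu. have hv := pos_v u Hu.
  auto_derive.
  have hp : forall k, (1 + - (z*u))^k <> 0 by (intros; apply pow_nonzero; lra).
  repeat split; repeat apply Rmult_integral_contrapositive_currified; auto; lra.
  rewrite /fI. change (match n with 0%nat => 1 | S _ => INR n + 1 end) with (INR (S n)).
  rewrite !S_INR. simpl.
  replace (1 + - (z * u)) with (1 - z * u) by ring.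
  have hY : (1 - z * u) ^ n <> 0 by (apply pow_nonzero; lra).
  set Y := (1 - z * u) ^ n. set X := (u * (1 - u)) ^ n.
  field. repeat split; try exact hY; try (apply Rgt_not_eq; lra).
Qed.

Lemma Iint_rec n : INR (S (S n)) * z ^ 2 * Iint (S (S n)) - (2 * INR n + 3) * (2 - z) * Iint (S n) + INR (S n) * Iint n = 0.
Proof.
  set G := (fun u => (u * (1 - u)) ^ (S n) * (1 - 2 * u + z * u ^ 2) / (1 - z * u) ^ (S (S n))).
  have H1 : is_RInt (fun u => INR (S (S n)) * z ^ 2 * fI (S (S n)) u - (2 * INR n + 3) * (2 - z) * fI (S n) u + INR (S n) * fI n u) 0 1 (minus (G 1) (G 0)).
  { apply: is_RInt_derive.
    - intros u. rewrite Rmin01 Rmax01 => Hu. apply Gder. exact Hu.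
    - intros u. rewrite Rmin01 Rmax01 => Hu. have hv := pos_v u Hu.
      apply: ex_derive_continuous. rewrite /fI. auto_derive.
      have hp : forall k, (1 + - (z*u))^k <> 0 by (intros; apply pow_nonzero; lra).
      repeat split; repeat apply Rmult_integral_contrapositive_currified; auto; lra. }
  have H2 : is_RInt (fun u => INR (S (S n)) * z ^ 2 * fI (S (S n)) u - (2 * INR n + 3) * (2 - z) * fI (S n) u + INR (S n) * fI n u) 0 1
      (INR (S (S n)) * z ^ 2 * Iint (S (S n)) - (2 * INR n + 3) * (2 - z) * Iint (S n) + INR (S n) * Iint n).
  { apply: is_RInt_plus. apply: is_RInt_minus.
    all: apply: is_RInt_scal; apply: RInt_correct; apply ex_RInt_fI. }
  rewrite -(is_RInt_unique _ _ _ _ H2) (is_RInt_unique _ _ _ _ H1).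
  rewrite /G /minus /plus /opp /=. field. 
  repeat split; try (apply pow_nonzero); apply Rgt_not_eq; lra.
Qed.

Lemma Iint_0 : z * Iint 0 = - ln (1 - z).
Proof.
  have H1 : is_RInt (fun u => z * fI 0 u) 0 1 (minus ((fun u => - ln (1 - z * u)) 1) ((fun u => - ln (1 - z * u)) 0)).
  { apply: (is_RInt_derive (fun u => - ln (1 - z*u))).
    - intros u. rewrite Rmin01 Rmax01 => Hu. have hv := pos_v u Hu.
      auto_derive. lra. rewrite /fI /=. field. lra.
    - intros u. rewrite Rmin01 Rmax01 => Hu. have hv := pos_v u Hu.
      apply: ex_derive_continuous. rewrite /fI. auto_derive. lra. }
  have H2 : is_RInt (fun u => z * fI 0 u) 0 1 (z * Iint 0).
  { apply: is_RInt_scal; apply: RInt_correct; apply ex_RInt_fI. }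
  rewrite -(is_RInt_unique _ _ _ _ H2) (is_RInt_unique _ _ _ _ H1).
  rewrite /minus /plus /opp /=. replace (1 - z * 0) with 1 by ring. rewrite ln_1. 
  replace (1 - z * 1) with (1 - z) by ring. ring.
Qed.

Lemma Iint_1 : z ^ 3 * Iint 1 = (2 - z) * (- ln (1 - z)) - 2 * z.
Proof.
  set F := (fun u => (1 - z * u) - (2 - z) * ln (1 - z * u) - (1 - z) / (1 - z * u)).
  have H1 : is_RInt (fun u => z ^ 3 * fI 1 u) 0 1 (minus (F 1) (F 0)).
  { apply: (is_RInt_derive F).
    - intros u. rewrite Rmin01 Rmax01 => Hu. have hv := pos_v u Hu.
      rewrite /F. auto_derive. repeat split; try lra; apply Rgt_not_eq; lra.
      rewrite /fI /=. field. apply Rgt_not_eq; lra.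
    - intros u. rewrite Rmin01 Rmax01 => Hu. have hv := pos_v u Hu.
      apply: ex_derive_continuous. rewrite /fI. auto_derive. 
      have hp : forall k, (1 + - (z*u))^k <> 0 by (intros; apply pow_nonzero; lra).
      repeat split; repeat apply Rmult_integral_contrapositive_currified; auto; lra. }
  have H2 : is_RInt (fun u => z ^ 3 * fI 1 u) 0 1 (z ^ 3 * Iint 1).
  { apply: is_RInt_scal; apply: RInt_correct; apply ex_RInt_fI. }
  rewrite -(is_RInt_unique _ _ _ _ H2) (is_RInt_unique _ _ _ _ H1).
  rewrite /F /minus /plus /opp /=. replace (1 - z * 0) with 1 by ring. rewrite ln_1. 
  replace (1 - z * 1) with (1 - z) by ring. field. apply Rgt_not_eq; lra.
Qed.
End I.

Lemma err_eq (z : R) (hz1 : z < 1) n :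
  - ln (1 - z) * cf_q (log_a z) (log_b z) n - cf_p (log_a z) (log_b z) n = INR (fact n) * z ^ (2 * n + 1) * Iint z n
  /\ - ln (1 - z) * cf_q (log_a z) (log_b z) (S n) - cf_p (log_a z) (log_b z) (S n) = INR (fact (S n)) * z ^ (2 * S n + 1) * Iint z (S n).
Proof.
  induction n as [|n [IH1 IH2]].
  - split.
    + rewrite /= -(Iint_0 z hz1). ring.
    + have h1 := Iint_1 z hz1. rewrite /=. rewrite /= in h1. nra.
  - split; [exact IH2|].
    rewrite cf_p_SS cf_q_SS.
    have e : forall L a b c d e f : R, L * (a * c + e * d) - (a * b + e * f) = a * (L * c - b) + e * (L * d - f).
    { intros. ring. }
    rewrite e IH1 IH2.
    have hr := Iint_rec z hz1 n.
    replace (fact (S (S n))) with ((S (S n)) * (S n) * fact n)%nat by (simpl; lia).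
    replace (fact (S n)) with ((S n) * fact n)%nat by (simpl; lia).
    replace (2 * S (S n) + 1)%nat with (2 * n + 1 + 4)%nat by lia.
    replace (2 * S n + 1)%nat with (2 * n + 1 + 2)%nat by lia.
    rewrite !mult_INR (pow_add z (2*n+1) 4) (pow_add z (2*n+1) 2) /log_a /log_b.
    have ex : INR (S (S n)) * z ^ 2 * Iint z (S (S n)) = (2 * INR n + 3) * (2 - z) * Iint z (S n) - INR (S n) * Iint z n by lra.
    replace (INR (S (S n)) * INR (S n) * INR (fact n) * (z ^ (2 * n + 1) * z ^ 4) * Iint z (S (S n)))
      with (INR (S n) * INR (fact n) * (z ^ (2 * n + 1) * z ^ 2) * (INR (S (S n)) * z ^ 2 * Iint z (S (S n)))) by ring.
    rewrite ex !S_INR. ring.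
Qed.


Lemma ex_series_geomM M r : 0 <= r < 1 -> ex_series (fun k => M * r ^ k).
Proof.
  intros Hr. apply: (ex_series_scal_l M (fun k => r ^ k)).
  apply ex_series_geom. rewrite Rabs_pos_eq; lra.
Qed.

Lemma ex_series_dom (a : nat -> R) M r : 0 <= r < 1 -> (forall k, Rabs (a k) <= M * r ^ k) ->
  ex_series (fun k => Rabs (a k)).
Proof.
  intros Hr H. apply: (ex_series_le _ (fun k => M * r ^ k)).
  intros k. rewrite /norm /= /abs /= Rabs_Rabsolu. apply H.
  apply ex_series_geomM; auto.
Qed.

Lemma Series_geomM M r : 0 <= r < 1 -> Series (fun k => M * r ^ k) = M / (1 - r).
Proof.
  intros Hr. have hr : Rabs r < 1 by (rewrite Rabs_pos_eq; lra).
  rewrite Series_scal_l. rewrite (is_series_unique _ _ (is_series_geom r hr)).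
  field. lra.
Qed.

Lemma lim_finite_sum (f : nat -> nat -> R) (g : nat -> R) K :
  (forall k, is_lim_seq (fun n => f n k) (g k)) ->
  is_lim_seq (fun n => sum_f_R0 (f n) K) (sum_f_R0 g K).
Proof.
  intros H. induction K as [|K IH]. simpl. apply H.
  simpl. apply: is_lim_seq_plus'. exact IH. apply H.
Qed.

Lemma dom_series (f : nat -> nat -> R) (g : nat -> R) (M r : R) :
  0 <= r < 1 -> (forall n k, Rabs (f n k) <= M * r ^ k) ->
  (forall k, is_lim_seq (fun n => f n k) (g k)) ->
  is_lim_seq (fun n => Series (f n)) (Series g).
Proof.
  intros Hr Hf Hl.
  have HM : 0 <= M. { have := Hf O O. have := Rabs_pos (f O O). simpl. lra. }
  have Hg : forall k, Rabs (g k) <= M * r ^ k.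
  { intros k. have L := is_lim_seq_abs _ _ (Hl k).
    have := is_lim_seq_le _ _ _ _ (fun n => Hf n k) L (is_lim_seq_const (M * r ^ k)). simpl. auto. }
  have Eg : ex_series g := ex_series_Rabs _ (ex_series_dom _ _ _ Hr Hg).
  have Ef : forall n, ex_series (f n) := fun n => ex_series_Rabs _ (ex_series_dom _ _ _ Hr (Hf n)).
  set h := fun n k => f n k - g k.
  have Hh : forall n k, Rabs (h n k) <= (2 * M) * r ^ k.
  { intros n k. rewrite /h. have := Rabs_triang (f n k) (- g k). rewrite Rabs_Ropp.
    have := Hf n k. have := Hg k. intros. unfold Rminus. lra. }
  apply is_lim_seq_spec. intros eps.
  have hgeom : is_lim_seq (fun n => r ^ n) 0 by (apply is_lim_seq_geom; rewrite Rabs_pos_eq; lra).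
  apply is_lim_seq_spec in hgeom.
  set d := eps * (1 - r) / (4 * M + 1).
  have hd : 0 < d by (rewrite /d; have := cond_pos eps; intros; apply Rdiv_lt_0_compat; nra).
  destruct (hgeom (mkposreal d hd)) as [K HK]. simpl in HK.
  have rK : r ^ (S K) < d.
  { have := HK (S K) (ltac:(lia)). rewrite Rminus_0_r Rabs_pos_eq. auto. apply pow_le; lra. }
  have hl0 : forall k, is_lim_seq (fun n => h n k) 0.
  { intros k. have := is_lim_seq_minus' _ _ _ _ (Hl k) (is_lim_seq_const (g k)). rewrite Rminus_eq_0. auto. }
  have hfin := lim_finite_sum h (fun _ => 0) K hl0.
  have e0 : sum_f_R0 (fun _ : nat => 0) K = 0.
  { clear. induction K; simpl; [lra|]. rewrite IHK. lra. }
  rewrite e0 in hfin.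
  apply is_lim_seq_spec in hfin.
  have he2 : 0 < eps / 2 by (have := cond_pos eps; lra).
  destruct (hfin (mkposreal _ he2)) as [N HN]. simpl in HN.
  exists N. intros n Hn.
  have Eh : ex_series (h n) by (apply: ex_series_Rabs; apply: (ex_series_dom _ (2*M) r); auto).
  rewrite -Series_minus; auto.
  change (Rabs (Series (h n)) < eps).
  rewrite (Series_incr_n (h n) (S K)); [|lia|auto]. simpl pred.
  have tail : Rabs (Series (fun k => h n (S K + k)%nat)) <= 2 * M * r ^ (S K) / (1 - r).
  { have Et : ex_series (fun k => Rabs (h n (S K + k)%nat)).
    { apply: (ex_series_dom _ (2 * M * r ^ (S K)) r); auto. intros k.
      replace (2 * M * r ^ S K * r ^ k) with (2 * M * r ^ (S K + k)) by (rewrite pow_add; ring). apply Hh. }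
    apply: Rle_trans. apply Series_Rabs. exact Et.
    rewrite -Series_geomM; auto.
    apply Series_le. intros k. split. apply Rabs_pos. 
    replace (2 * M * r ^ S K * r ^ k) with (2 * M * r ^ (S K + k)) by (rewrite pow_add; ring). apply Hh.
    apply ex_series_geomM; auto. }
  have := HN n Hn. rewrite Rminus_0_r. intros h1.
  have h2 : 2 * M * r ^ S K / (1 - r) <= 2 * M * d / (1 - r).
  { apply Rmult_le_compat_r. apply Rlt_le, Rinv_0_lt_compat; lra.
    apply Rmult_le_compat_l; lra. }
  have h3 : 2 * M * d / (1 - r) < eps / 2.
  { rewrite /d. have := cond_pos eps. intros.
    apply (Rmult_lt_reg_r ((4 * M + 1))). lra.
    replace (2 * M * (eps * (1 - r) / (4 * M + 1)) / (1 - r) * (4 * M + 1)) with (2 * M * eps) by (field; lra).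
    nra. }
  have := Rabs_triang (sum_f_R0 (h n) K) (Series (fun k => h n (S K + k)%nat)). lra.
Qed.


Lemma ex_series_zero : ex_series (fun _ : nat => 0).
Proof. apply: (ex_series_ext (fun k => 0 * 0 ^ k) _ _ (ex_series_geomM 0 0 ltac:(lra))). intros n; apply Rmult_0_l. Qed.

Lemma Series_zero : Series (fun _ : nat => 0) = 0.
Proof. have -> : Series (fun _ : nat => 0) = Series (fun _ : nat => 0 * 1) by (apply Series_ext; intros; ring). rewrite Series_scal_l. ring. Qed.

Lemma Series_trunc (a : nat -> R) n : Series (fun k => if (k <=? n)%nat then a k else 0) = sum_f_R0 a n.
Proof.
  have Et : ex_series (fun k => (fun k => if (k <=? n)%nat then a k else 0) (S n + k)%nat).
  { apply: (ex_series_ext (fun _ => 0)). intros k. 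
    have -> : (S n + k <=? n)%nat = false by (apply Nat.leb_gt; lia). reflexivity. apply ex_series_zero. }
  have Ea := proj2 (@ex_series_incr_n _ R_NormedModule (fun k : nat => if (k <=? n)%nat then a k else 0) (S n)) Et.
  rewrite (Series_incr_n _ (S n) ltac:(lia) Ea).
  simpl pred. 
  have -> : Series (fun k => (fun k => if (k <=? n)%nat then a k else 0) (S n + k)%nat) = Series (fun _ => 0).
  { apply Series_ext. intros k. have -> : (S n + k <=? n)%nat = false by (apply Nat.leb_gt; lia). reflexivity. }
  rewrite Series_zero Rplus_0_r. apply sum_eq. intros i Hi.
  have -> : (i <=? n)%nat = true by (apply Nat.leb_le; lia). reflexivity.
Qed.

Lemma cc_ratio k : is_lim_seq (fun m => cc m / cc (m + k)) 1.
Proof.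
  induction k as [|k IH].
  - apply: (is_lim_seq_ext (fun _ => 1)). intros m. rewrite Nat.add_0_r. have := cc_pos m. intros. field. lra.
    apply is_lim_seq_const.
  - have H2 : is_lim_seq (fun m => 1 + / 2 * / (INR (m + k) + / 2)) 1.
    { have L : is_lim_seq (fun m => 1 + / 2 * / (INR (m + k) + / 2)) (1 + / 2 * 0).
      2: { replace (1 + / 2 * 0) with 1 in L by ring. exact L. }
      apply: is_lim_seq_plus'. apply is_lim_seq_const. apply: is_lim_seq_mult'. apply is_lim_seq_const.
      apply (is_lim_seq_incr_n (fun m => / (INR m + / 2)) k). apply lim_inv_n. lra. }
    have := is_lim_seq_mult' _ _ _ _ IH H2. rewrite Rmult_1_l.
    apply is_lim_seq_ext. intros m.
    replace (m + S k)%nat with (S (m + k)) by lia. rewrite cc_S.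
    have := cc_pos (m + k). have := cc_pos m. have := pos_INR (m + k). intros. field. lra.
Qed.

Lemma conv_cc n : conv cc cc n = 1 /\ conv cc cc (S n) = 1.
Proof.
  have hV : forall j, INR (S j) * cc (S j) = 1 * ((INR j + / 2) * cc j).
  { intros j. rewrite cc_S S_INR. have := pos_INR j. intros. field. lra. }
  induction n as [|n [IH1 IH2]].
  - split. rewrite /conv /=. ring. rewrite /conv /=. field.
  - split; auto. have := conv_rec 1 1 cc cc hV hV n. rewrite IH1 IH2.
    intros H. apply (Rmult_eq_reg_l (INR (S (S n)))). rewrite H !S_INR. field.
    apply not_0_INR. lia.
Qed.

Lemma wallis2 : is_lim_seq (fun m => INR (S m) * cc (S m) * cc m) (/ PI).
Proof.
  have W1 := proj1 (is_lim_seq_incr_1 _ _) wallis.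
  have H2 : is_lim_seq (fun m => 1 + / 2 * / (INR m + / 2)) 1.
  { have L : is_lim_seq (fun m => 1 + / 2 * / (INR m + / 2)) (1 + / 2 * 0).
    2: { replace (1 + / 2 * 0) with 1 in L by ring. exact L. }
    apply: is_lim_seq_plus'. apply is_lim_seq_const. apply: is_lim_seq_mult'. apply is_lim_seq_const.
    apply lim_inv_n. lra. }
  have := is_lim_seq_mult' _ _ _ _ W1 H2. rewrite Rmult_1_r.
  apply is_lim_seq_ext. intros m. rewrite cc_S S_INR. have := cc_pos m. have := pos_INR m. intros. field. lra.
Qed.

Lemma lim_bounded (u : nat -> R) (l : R) : is_lim_seq u l -> exists M, forall n, Rabs (u n) <= M.
Proof.
  intros H. apply is_lim_seq_spec in H. destruct (H (mkposreal 1 ltac:(lra))) as [N HN]. simpl in HN.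
  have fin : forall N', exists M, forall n, (n < N')%nat -> Rabs (u n) <= M.
  { induction N' as [|N' [M HM]]. exists 0. intros; lia.
    exists (Rmax M (Rabs (u N'))). intros n Hn. destruct (Nat.eq_dec n N') as [->|ne].
    apply Rmax_r. apply: Rle_trans. apply HM. lia. apply Rmax_l. }
  destruct (fin N) as [M HM]. exists (Rmax M (Rabs l + 1)). intros n.
  destruct (Compare_dec.le_lt_dec N n) as [h|h].
  - have := HN n h. have := Rabs_triang_inv (u n) l. have := Rmax_r M (Rabs l + 1). lra.
  - apply: Rle_trans. apply HM. auto. apply Rmax_l.
Qed.

Lemma cc_le1 n : cc n <= 1.
Proof.
  induction n as [|n IH]. simpl; lra. rewrite cc_S. have := cc_pos n. have := pos_INR n. intros.
  apply (Rmult_le_reg_r (2 * INR n + 2)). lra.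
  replace (cc n * (2 * INR n + 1) / (2 * INR n + 2) * (2 * INR n + 2)) with (cc n * (2 * INR n + 1)) by (field; lra).
  nra.
Qed.


Lemma sum_ge_first (f : nat -> R) n : (forall i, 0 <= f i) -> f O <= sum_f_R0 f n.
Proof. intros H. induction n as [|n IH]; simpl; [lra|]. have := H (S n). lra. Qed.

Lemma sum_pos (f : nat -> R) n : (forall i, 0 <= f i) -> 0 <= sum_f_R0 f n.
Proof. intros H. have := sum_ge_first f n H. have := H O. lra. Qed.

Lemma cc_lb n : 1 <= cc n * INR (S n).
Proof.
  induction n as [|n IH]. simpl. lra.
  rewrite cc_S. have := cc_pos n. have := pos_INR n. intros.
  rewrite !S_INR in IH |- *.
  replace (cc n * (2 * INR n + 1) / (2 * INR n + 2) * (INR n + 1 + 1))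
    with (cc n * (INR n + 1) * ((2 * INR n + 1) * (INR n + 2) / ((2 * INR n + 2) * (INR n + 1)))) by (field; lra).
  have : 1 <= (2 * INR n + 1) * (INR n + 2) / ((2 * INR n + 2) * (INR n + 1)).
  { apply (Rmult_le_reg_r ((2 * INR n + 2) * (INR n + 1))). nra.
    replace ((2 * INR n + 1) * (INR n + 2) / ((2 * INR n + 2) * (INR n + 1)) * ((2 * INR n + 2) * (INR n + 1)))
      with ((2 * INR n + 1) * (INR n + 2)) by (field; lra). nra. }
  intros. nra.
Qed.

Lemma lim_n_geom r : 0 <= r < 1 -> is_lim_seq (fun n => INR (S n) * r ^ n) 0.
Proof.
  intros Hr. destruct (Req_dec r 0) as [->|nz].
  - apply: (is_lim_seq_ext_loc (fun _ => 0)). exists 1%nat. intros n Hn.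
    destruct n; [lia|]. simpl. ring. apply is_lim_seq_const.
  - have hr : 0 < r by lra.
    have E : ex_series (fun n => Rabs (INR (S n) * r ^ n)).
    { apply: (ex_series_DAlembert _ r). lra.
      intros n. apply Rmult_integral_contrapositive_currified. apply not_0_INR; lia. apply pow_nonzero; lra.
      apply: (is_lim_seq_ext (fun n => r * (1 + / (INR n + 1)))).
      intros n. rewrite !S_INR /=. have := pos_INR n. intros.
      have hp : 0 < r ^ n by apply pow_lt; lra.
      rewrite Rabs_pos_eq. field. split; lra.
      apply Rle_mult_inv_pos. apply Rmult_le_pos. lra. apply Rmult_le_pos. lra. lra.
      apply Rmult_lt_0_compat. lra. lra.
      have L : is_lim_seq (fun n => r * (1 + / (INR n + 1))) (r * (1 + 0)).
      2: { replace (r * (1 + 0)) with r in L by ring. exact L. }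
      apply: is_lim_seq_mult'. apply is_lim_seq_const. apply: is_lim_seq_plus'. apply is_lim_seq_const.
      apply lim_inv_n; lra. }
    apply is_lim_seq_abs_0. apply ex_series_lim_0. exact E.
Qed.

Lemma pow_div x y n : (x / y) ^ n = x ^ n / y ^ n.
Proof. rewrite /Rdiv Rpow_mult_distr pow_inv. reflexivity. Qed.

Section Main.
Variables z s : R.
Hypotheses (hz1 : z < 1) (hs0 : 0 < s) (hs : s * s = 1 - z) (hs1 : s <> 1).

Let A := AA s.
Let B := BB s.
Let r := B / A.
Let L := - ln (1 - z).
Let q n := cf_q (log_a z) (log_b z) n.
Let p n := cf_p (log_a z) (log_b z) n.

Lemma hA : 0 < A. Proof. rewrite /A /AA. nra. Qed.
Lemma hB : 0 < B. Proof. rewrite /B /BB. have : 1 - s <> 0 by (intros h; apply hs1; lra). intros. have := pow2_ge_0 (1 - s). have := pow_nonzero (1 - s) 2 ltac:(auto). lra. Qed.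
Lemma hr : 0 < r < 1.
Proof. have := hA. have := hB. rewrite /r /A /B /AA /BB. intros. split. apply Rdiv_lt_0_compat; lra.
  apply (Rmult_lt_reg_r ((1 + s) ^ 2)). lra. rewrite /Rdiv Rmult_assoc Rinv_l. nra. lra. Qed.
Lemma hz0 : z <> 0.
Proof. intros ->. have : s * s = 1 by lra. intros. apply hs1. nra. Qed.
Lemma hzAB : z ^ 2 = A * B.
Proof. rewrite /A /B (AB_prod z s hs); auto. Qed.

Lemma WW_nonneg i : 0 <= WW s i.
Proof. rewrite /WW. have := cc_pos i. have := pow_le (BB s) i. have := hB. rewrite /B. intros. nra. Qed.
Lemma VV_nonneg i : 0 <= VV s i.
Proof. rewrite /VV. have := cc_pos i. have := pow_le (AA s) i. have := hA. rewrite /A. intros. nra. Qed.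

Lemma UU_ge n : cc n * A ^ n <= UU s n.
Proof.
  rewrite /UU /conv. 
  have := sum_ge_first (fun j => WW s j * VV s (n - j)%nat) n.
  rewrite /WW /VV /= Nat.sub_0_r. intros H. rewrite -/A. 
  replace (cc n * A ^ n) with (1 * 1 * (cc n * A ^ n)) by ring. apply H.
  intros i. apply Rmult_le_pos; [apply WW_nonneg|apply VV_nonneg].
Qed.

Lemma UU_pos n : 0 < UU s n.
Proof. have := UU_ge n. have := cc_pos n. have := pow_lt A n hA. intros. nra. Qed.

Lemma q_val n : q n = INR (fact n) * UU s n.
Proof. exact (proj1 (q_eq z s hs n)). Qed.

Lemma q_pos n : 0 < q n.
Proof. rewrite q_val. apply Rmult_lt_0_compat. apply lt_0_INR. apply lt_O_fact. apply UU_pos. Qed.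

Lemma e_formula n : L - p n / q n = z ^ (2 * n + 1) * Iint z n / UU s n.
Proof.
  have := proj1 (err_eq z hz1 n). rewrite -/L -/(q n) -/(p n). intros H.
  have hq := q_pos n. have hU := UU_pos n.
  have hf : 0 < INR (fact n) by (apply lt_0_INR; apply lt_O_fact).
  have -> : L - p n / q n = (L * q n - p n) / q n by (field; lra).
  rewrite H q_val. field. lra.
Qed.

Let K := 1 + / (1 - z).

Lemma g_bound u : 0 <= u <= 1 -> u * (1 - u) / (1 - z * u) <= / A.
Proof.
  intros Hu. have hv := pos_v z hz1 u Hu. have := hA. intros.
  apply (Rmult_le_reg_r ((1 - z * u) * A)). nra.
  replace (u * (1 - u) / (1 - z * u) * ((1 - z * u) * A)) with (u * (1 - u) * A) by (field; lra).
  replace (/ A * ((1 - z * u) * A)) with (1 - z * u) by (field; lra).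
  have e : 1 - z * u - u * (1 - u) * A = ((1 + s) * u - 1) ^ 2.
  { rewrite /A /AA. replace z with (1 - s * s) by lra. ring. }
  have := pow2_ge_0 ((1 + s) * u - 1). lra.
Qed.

Lemma Iint_bound n : 0 <= Iint z n <= K * (/ A) ^ n.
Proof.
  have hK : forall u, 0 <= u <= 1 -> / (1 - z * u) <= K.
  { intros u Hu. have hv := pos_v z hz1 u Hu. rewrite /K.
    have h1 : 0 < / (1 - z) by (apply Rinv_0_lt_compat; lra).
    destruct (Rle_dec z 0).
    - have : 1 <= 1 - z * u by nra. intros. 
      have : / (1 - z * u) <= 1. { rewrite -Rinv_1. apply Rinv_le_contravar; lra. } lra.
    - have : 1 - z <= 1 - z * u by nra. intros.
      have : / (1 - z * u) <= / (1 - z) by (apply Rinv_le_contravar; lra). lra. }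
  have hf : forall u, 0 <= u <= 1 -> 0 <= fI z n u <= K * (/ A) ^ n.
  { intros u Hu. have hv := pos_v z hz1 u Hu. 
    have hg := g_bound u Hu.
    have hg0 : 0 <= u * (1 - u) / (1 - z * u) by (apply Rle_mult_inv_pos; nra).
    have e : fI z n u = (u * (1 - u) / (1 - z * u)) ^ n * / (1 - z * u).
    { rewrite /fI pow_div. simpl. field. split; [lra|apply pow_nonzero; lra]. }
    rewrite e. have := hK u Hu. have := pow_incr _ _ n (conj hg0 hg). 
    have := pow_le _ n hg0. have : 0 <= / (1 - z * u) by (apply Rlt_le, Rinv_0_lt_compat; lra).
    intros. split. apply Rmult_le_pos; lra. 
    have : 0 <= K by (have := Rinv_0_lt_compat (1 - z) ltac:(lra); rewrite /K; lra).
    intros. rewrite (Rmult_comm K). apply Rmult_le_compat; lra. }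
  split.
  - apply RInt_ge_0. lra. apply ex_RInt_fI; auto. intros u Hu. apply hf; lra.
  - have := RInt_le (fI z n) (fun _ => K * (/ A) ^ n) 0 1 ltac:(lra) (ex_RInt_fI z hz1 n) (ex_RInt_const _ _ _).
    rewrite RInt_const /scal /= /mult /=. intros H. 
    replace (K * (/ A) ^ n) with ((1 - 0) * (K * (/ A) ^ n)) by ring. apply H. 
    intros u Hu. apply hf; lra.
Qed.

Lemma err_bound n : Rabs (L - p n / q n) <= Rabs z * K * (INR (S n) * r ^ n).
Proof.
  rewrite e_formula. 
  have hU := UU_pos n. have hUg := UU_ge n. have hc := cc_pos n. have hcl := cc_lb n.
  have [hI0 hI1] := Iint_bound n. have hAn := pow_lt A n hA. have hBn := pow_lt B n hB.
  have hK0 : 0 <= K by (have := Rinv_0_lt_compat (1 - z) ltac:(lra); rewrite /K; lra).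
  replace (z ^ (2 * n + 1)) with (z * (A * B) ^ n) by (rewrite -hzAB -pow_mult pow_add /=; ring).
  rewrite Rpow_mult_distr.
  rewrite /Rdiv Rabs_mult Rabs_mult Rabs_mult (Rabs_pos_eq (A ^ n * B ^ n)); [|nra].
  rewrite (Rabs_pos_eq (Iint z n)); [|lra]. rewrite Rabs_Rinv; [|lra]. rewrite (Rabs_pos_eq (UU s n)); [|lra].
  have hr' : r ^ n = B ^ n / A ^ n by (rewrite /r pow_div; auto).
  rewrite hr'.
  have h1 : Iint z n * / UU s n <= K * (/ A) ^ n * / (cc n * A ^ n).
  { apply Rmult_le_compat; try lra. apply Rlt_le, Rinv_0_lt_compat; lra.
    apply Rinv_le_contravar; nra. }
  have h2 : / cc n <= INR (S n).
  { apply (Rmult_le_reg_r (cc n)); auto. rewrite Rinv_l; lra. }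
  have hz := Rabs_pos z.
  have h3 : Rabs z * (A ^ n * B ^ n) * (Iint z n * / UU s n) <= Rabs z * (A ^ n * B ^ n) * (K * (/ A) ^ n * / (cc n * A ^ n)).
  { apply Rmult_le_compat_l; [apply Rmult_le_pos; [lra|apply Rlt_le, Rmult_lt_0_compat; lra]|exact h1]. }
  replace (Rabs z * (A ^ n * B ^ n) * Iint z n * / UU s n) with (Rabs z * (A ^ n * B ^ n) * (Iint z n * / UU s n)) by ring.
  apply: Rle_trans. apply h3.
  replace (Rabs z * (A ^ n * B ^ n) * (K * (/ A) ^ n * / (cc n * A ^ n))) with (Rabs z * K * (B ^ n / A ^ n) * / cc n).
  2: { rewrite pow_inv. field. lra. }
  replace (Rabs z * K * (INR (S n) * (B ^ n / A ^ n))) with (Rabs z * K * (B ^ n / A ^ n) * INR (S n)) by ring.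
  apply Rmult_le_compat_l; auto. apply Rmult_le_pos. nra. apply Rlt_le, Rdiv_lt_0_compat; lra.
Qed.

Lemma part1 : is_lim_seq (fun n => p n / q n) L.
Proof.
  have H : is_lim_seq (fun n => L - p n / q n) 0.
  { apply is_lim_seq_abs_0.
    apply: (is_lim_seq_le_le (fun _ => 0) _ (fun n => Rabs z * K * (INR (S n) * r ^ n))).
    intros n. split. apply Rabs_pos. apply err_bound.
    apply is_lim_seq_const.
    have := is_lim_seq_scal_l _ (Rabs z * K) _ (lim_n_geom r ltac:(have := hr; lra)).
    simpl. rewrite Rmult_0_r. auto. }
  have := is_lim_seq_minus' _ _ _ _ (is_lim_seq_const L) H.
  rewrite Rminus_0_r. apply is_lim_seq_ext. intros n. ring.
Qed.

Let tau n := UU s n / (cc n * A ^ n).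
Let ft n k := if (k <=? n)%nat then cc k * cc (n - k) / cc n * r ^ k else 0.
Let Sg := Series (fun k => cc k * r ^ k).

Lemma tau_eq n : tau n = Series (ft n).
Proof.
  rewrite /ft Series_trunc /tau /UU /conv.
  have hc := cc_pos n. have hAn := pow_lt A n hA.
  rewrite /Rdiv -(Rmult_comm (/ (cc n * A ^ n))) -sum_mul_l.
  apply sum_eq. intros j Hj. rewrite /WW /VV -/A -/B /r pow_div.
  have e : A ^ n = A ^ (n - j) * A ^ j by (rewrite -pow_add; f_equal; lia).
  rewrite e. have := pow_lt A j hA. have := pow_lt A (n - j) hA. intros. field.
  repeat split; lra.
Qed.

Definition M0 := 5 / (2 * PI) + 1.

Lemma ft_bound n k : Rabs (ft n k) <= M0 * r ^ k.
Proof.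
  have [hr0 hr1] := hr. have hrk := pow_lt r k hr0. have hp := PI_RGT_0.
  have hM0 : 0 < 5 / (2 * PI) by (apply Rdiv_lt_0_compat; lra).
  have hM1 : 1 <= M0 by (unfold M0; lra).
  rewrite /ft. destruct (k <=? n)%nat eqn:Ek; [|rewrite Rabs_R0; nra].
  apply Nat.leb_le in Ek.
  have h1 := cc_pos k. have h2 := cc_pos (n - k)%nat. have h3 := cc_pos n.
  set R0 := cc k * cc (n - k) / cc n.
  have hR0 : 0 <= R0 by (apply Rlt_le; rewrite /R0; apply Rdiv_lt_0_compat; nra).
  rewrite Rabs_pos_eq; [|nra]. apply Rmult_le_compat_r; [lra|].
  destruct (Nat.eq_dec k 0) as [->|nk0].
  { rewrite /R0 Nat.sub_0_r /=. replace (1 * cc n / cc n) with 1 by (field; lra). lra. }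
  destruct (Nat.eq_dec k n) as [->|nkn].
  { rewrite /R0 Nat.sub_diag /=. replace (cc n * 1 / cc n) with 1 by (field; lra). lra. }
  have hnat : (2 * n + 1 <= 5 * (k * (n - k)))%nat by nia.
  have hreal : 2 * INR n + 1 <= 5 * (INR k * INR (n - k)).
  { have := le_INR _ _ hnat. rewrite plus_INR !mult_INR. simpl (INR 1). simpl (INR 2). simpl (INR 5). lra. }
  have w1 := wallis_up k. have w2 := wallis_up (n - k). have w3 := wallis_lo n.
  have hk : 0 < INR k by (apply lt_0_INR; lia).
  have hnk : 0 < INR (n - k) by (apply lt_0_INR; lia).
  have hn : 0 <= INR n := pos_INR n.
  have a1 : PI * INR k * cc k ^ 2 <= 1.
  { have := Rmult_le_compat_l PI _ _ (Rlt_le _ _ hp) w1. rewrite Rinv_r; [|apply Rgt_not_eq; lra]. nra. }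
  have a2 : PI * INR (n - k) * cc (n - k) ^ 2 <= 1.
  { have := Rmult_le_compat_l PI _ _ (Rlt_le _ _ hp) w2. rewrite Rinv_r; [|apply Rgt_not_eq; lra]. nra. }
  have a3 : 2 <= (2 * INR n + 1) * PI * cc n ^ 2.
  { have := Rmult_le_compat_l ((2 * INR n + 1) * PI) _ _ ltac:(nra) w3.
    replace ((2 * INR n + 1) * PI * (2 / ((2 * INR n + 1) * PI))) with 2 by (field; lra). nra. }
  have a4 : (PI * INR k * cc k ^ 2) * (PI * INR (n - k) * cc (n - k) ^ 2) <= 1.
  { have p1 : 0 <= PI * INR k * cc k ^ 2 by (apply Rmult_le_pos; [apply Rmult_le_pos|apply pow2_ge_0]; lra).
    have p2 : 0 <= PI * INR (n - k) * cc (n - k) ^ 2 by (apply Rmult_le_pos; [apply Rmult_le_pos|apply pow2_ge_0]; lra).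
    have := Rmult_le_compat _ _ _ _ p1 p2 a1 a2. lra. }
  have a5 : PI ^ 2 * (cc k ^ 2 * cc (n - k) ^ 2) * (2 * INR n + 1) <= 5.
  { have hab : 0 <= PI ^ 2 * (cc k ^ 2 * cc (n - k) ^ 2) by (apply Rmult_le_pos; [nra|]; apply Rmult_le_pos; nra).
    have := Rmult_le_compat_l _ _ _ hab hreal.
    replace (PI ^ 2 * (cc k ^ 2 * cc (n - k) ^ 2) * (5 * (INR k * INR (n - k)))) with
      (5 * ((PI * INR k * cc k ^ 2) * (PI * INR (n - k) * cc (n - k) ^ 2))) by ring.
    intros. lra. }
  have a6 : R0 ^ 2 <= 5 / (2 * PI).
  { rewrite /R0. 
    replace ((cc k * cc (n - k) / cc n) ^ 2) with ((cc k ^ 2 * cc (n - k) ^ 2) / cc n ^ 2) by (field; lra).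
    apply (Rmult_le_reg_r (2 * PI * cc n ^ 2)). nra.
    replace (cc k ^ 2 * cc (n - k) ^ 2 / cc n ^ 2 * (2 * PI * cc n ^ 2)) with (2 * PI * (cc k ^ 2 * cc (n - k) ^ 2)) by (field; lra).
    replace (5 / (2 * PI) * (2 * PI * cc n ^ 2)) with (5 * cc n ^ 2) by (field; lra).
    have hab : 0 <= cc k ^ 2 * cc (n - k) ^ 2 by nra.
    (* from a3 and a5 *)
    have : 2 * PI * (cc k ^ 2 * cc (n - k) ^ 2) * ((2 * INR n + 1) * PI) <= 5 * cc n ^ 2 * ((2 * INR n + 1) * PI).
    { nra. }
    intros H. apply (Rmult_le_reg_r ((2 * INR n + 1) * PI)). nra. lra. }
  rewrite /M0. nra.
Qed.

Lemma ft_lim k : is_lim_seq (fun n => ft n k) (cc k * r ^ k).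
Proof.
  apply (is_lim_seq_incr_n _ k).
  apply: (is_lim_seq_ext (fun n => cc k * r ^ k * (cc n / cc (n + k)))).
  { intros n. rewrite /ft. have -> : (k <=? n + k)%nat = true by (apply Nat.leb_le; lia).
    replace (n + k - k)%nat with n by lia. have := cc_pos (n + k). intros. field. lra. }
  have L0 := is_lim_seq_scal_l _ (cc k * r ^ k) _ (cc_ratio k). simpl in L0. rewrite Rmult_1_r in L0. exact L0.
Qed.

Lemma tau_lim : is_lim_seq tau Sg.
Proof.
  have [hr0 hr1] := hr.
  apply: (is_lim_seq_ext (fun n => Series (ft n))). intros n. by rewrite tau_eq.
  apply: (dom_series ft _ M0 r). lra. apply ft_bound. apply ft_lim.
Qed.

Lemma Sg_sq : Sg * Sg = / (1 - r).
Proof.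
  have [hr0 hr1] := hr.
  have ha : forall k, 0 <= cc k * r ^ k by (intros; have := cc_pos k; have := pow_lt r k hr0; nra).
  have Ea : ex_series (fun k => cc k * r ^ k).
  { apply: ex_series_Rabs. apply: (ex_series_dom _ 1 r). lra. intros k.
    rewrite Rabs_pos_eq; auto. have := cc_le1 k. have := pow_lt r k hr0. nra. }
  have := is_series_mult_pos _ _ _ _ (Series_correct _ Ea) (Series_correct _ Ea) ha ha.
  intros H.
  have e : forall n, sum_f_R0 (fun k => cc k * r ^ k * (cc (n - k) * r ^ (n - k))) n = r ^ n.
  { intros n. rewrite -(Rmult_1_r (r ^ n)). rewrite -(proj1 (conv_cc n)) /conv -sum_mul_l.
    apply sum_eq. intros i Hi. have : r ^ n = r ^ i * r ^ (n - i) by (rewrite -pow_add; f_equal; lia).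
    intros ->. ring. }
  have H' := is_series_ext _ _ _ e H.
  have := is_series_unique _ _ H'. rewrite (is_series_unique _ _ (is_series_geom r ltac:(rewrite Rabs_pos_eq; lra))).
  intros h. rewrite /Sg. lra.
Qed.

Let d m := p (S m) / q (S m) - p m / q m.

Lemma d_val m : d m = 2 * z ^ (2 * m + 1) / (INR (S m) * UU s (S m) * UU s m).
Proof.
  have w := wronski z m. rewrite -/(p m) -/(q m) -/(p (S m)) -/(q (S m)) in w.
  have h1 := q_pos m. have h2 := q_pos (S m).
  have -> : d m = (p (S m) * q m - p m * q (S m)) / (q (S m) * q m) by (rewrite /d; field; lra).
  rewrite w !q_val. replace (fact (S m)) with ((S m) * fact m)%nat by (simpl; lia).
  rewrite mult_INR. have := UU_pos m. have := UU_pos (S m).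
  have : 0 < INR (fact m) by (apply lt_0_INR; apply lt_O_fact).
  have : 0 < INR (S m) by (apply lt_0_INR; lia). intros. field. lra.
Qed.

Lemma tele n N : sum_f_R0 (fun j => d (n + j)%nat) N = p (S (n + N)) / q (S (n + N)) - p n / q n.
Proof.
  induction N as [|N IH]. simpl. rewrite /d Nat.add_0_r. ring.
  rewrite tech5 IH /d. replace (n + S N)%nat with (S (n + N)) by lia. ring.
Qed.

Lemma tail_series n : is_series (fun j => d (n + j)%nat) (L - p n / q n).
Proof.
  apply is_series_Reals. apply is_lim_seq_Reals.
  apply: (is_lim_seq_ext (fun N => p (S (n + N)) / q (S (n + N)) - p n / q n)).
  intros N. by rewrite tele.
  apply: is_lim_seq_minus'; [|apply is_lim_seq_const].
  have := proj1 (is_lim_seq_incr_n _ (S n) _) part1.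
  apply is_lim_seq_ext. intros N. by replace (N + S n)%nat with (S (n + N)) by lia.
Qed.

Let rho := A / z.
Let Fs m := rho ^ (2 * m + 1) * d m.

Lemma rho_r : rho ^ 2 * r = 1.
Proof.
  have := hz0. have := hA. have := hB. intros. rewrite /rho /r.
  replace ((A / z) ^ 2 * (B / A)) with ((A * B) / z ^ 2) by (field; lra).
  rewrite -hzAB. field. auto.
Qed.

Lemma Fs_val m : Fs m = 2 / (INR (S m) * cc (S m) * cc m * tau (S m) * tau m).
Proof.
  have := hz0. have := hA. have := UU_pos m. have := UU_pos (S m). have := cc_pos m. have := cc_pos (S m).
  have := pow_lt A m hA. have : 0 < INR (S m) by (apply lt_0_INR; lia). intros.
  rewrite /Fs d_val /rho /tau pow_div.
  replace (2 * m + 1)%nat with (S m + m)%nat by lia. rewrite !pow_add.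
  have := pow_nonzero z m ltac:(auto). have := pow_nonzero z (S m) ltac:(auto). intros.
  have := pos_INR m. intros. simpl. field. repeat split; try lra; auto. all: try (apply Rgt_not_eq; lra). change (INR (S m) <> 0). apply Rgt_not_eq; lra.
Qed.

Lemma Sg_nz : Sg <> 0.
Proof. intros h. have := Sg_sq. rewrite h Rmult_0_r. have := hr. intros [? ?] e.
  have : 0 < / (1 - r) by (apply Rinv_0_lt_compat; lra). lra. Qed.

Lemma Fs_lim : is_lim_seq Fs (2 * PI / (Sg * Sg)).
Proof.
  have T1 := proj1 (is_lim_seq_incr_1 _ _) tau_lim.
  have P := is_lim_seq_mult' _ _ _ _ (is_lim_seq_mult' _ _ _ _ wallis2 T1) tau_lim.
  have hp := PI_RGT_0. have hS := Sg_nz.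
  have hnz : / PI * Sg * Sg <> 0.
  { apply Rmult_integral_contrapositive_currified; auto. apply Rmult_integral_contrapositive_currified; auto.
    apply Rinv_neq_0_compat. lra. }
  have := is_lim_seq_div' _ _ _ _ (is_lim_seq_const 2) P hnz.
  replace (2 / (/ PI * Sg * Sg)) with (2 * PI / (Sg * Sg)) by (field; lra).
  apply is_lim_seq_ext. intros m. rewrite Fs_val. reflexivity.
Qed.

Lemma key n : rho ^ (2 * n + 1) * (L - p n / q n) = Series (fun j => Fs (n + j)%nat * r ^ j).
Proof.
  have H := is_series_scal_l (rho ^ (2 * n + 1)) _ _ (tail_series n).
  symmetry. apply is_series_unique.
  apply: (is_series_ext _ _ _ _ H). intros j. rewrite /scal /= /mult /= /Fs.
  replace (2 * (n + j) + 1)%nat with (2 * n + 1 + 2 * j)%nat by lia.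
  rewrite (pow_add rho (2*n+1) (2*j)) (pow_mult rho 2 j). 
  replace (rho ^ (2 * n + 1) * (rho ^ 2) ^ j * d (n + j)%nat * r ^ j) with (rho ^ (2 * n + 1) * (rho ^ 2 * r) ^ j * d (n + j)%nat) by (rewrite Rpow_mult_distr; ring).
  rewrite rho_r pow1 Rmult_1_r. do 2 f_equal.
Qed.

Lemma part2 : is_lim_seq (fun n => (L - p n / q n) / (2 * PI / rho ^ (2 * n + 1))) 1.
Proof.
  have [hr0 hr1] := hr. have hp := PI_RGT_0.
  have hrho : rho <> 0 by (rewrite /rho; have := hz0; have := hA; intros; apply Rmult_integral_contrapositive_currified; [lra|apply Rinv_neq_0_compat; auto]).
  destruct (lim_bounded _ _ Fs_lim) as [M HM].
  have D := dom_series (fun n j => Fs (n + j)%nat * r ^ j) (fun j => (2 * PI / (Sg * Sg)) * r ^ j) M r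
     ltac:(lra) ltac:(intros n k; rewrite Rabs_mult (Rabs_pos_eq (r ^ k)); [|apply pow_le; lra]; apply Rmult_le_compat_r; [apply pow_le; lra|apply HM])
     ltac:(intros k; apply: is_lim_seq_mult'; [apply (is_lim_seq_incr_n (fun m => Fs m) k); apply: (is_lim_seq_ext Fs); [intros; reflexivity|apply Fs_lim]|apply is_lim_seq_const]).
  rewrite Series_geomM in D; [|lra].
  have e2 : 2 * PI / (Sg * Sg) / (1 - r) = 2 * PI.
  { rewrite Sg_sq. field. lra. }
  rewrite e2 in D.
  have := is_lim_seq_scal_r _ (/ (2 * PI)) _ D. simpl. 
  replace (2 * PI * / (2 * PI)) with 1 by (field; lra).
  apply is_lim_seq_ext. intros n. rewrite -key. 
  replace (n + (n + 0) + 1)%nat with (2 * n + 1)%nat by lia. have := pow_nonzero rho (2 * n + 1) hrho. intros. field. have := q_pos n. intros. repeat split; auto; apply Rgt_not_eq; lra.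
Qed.
End Main.

Theorem theorem7p1 (z : R) (hz1 : z < 1) (hz0 : z <> 0) :
  is_lim_seq (fun n => cf_p (log_a z) (log_b z) n / cf_q (log_a z) (log_b z) n)
    (- ln (1 - z))
  /\
  is_lim_seq
    (fun n =>
       (- ln (1 - z) - cf_p (log_a z) (log_b z) n / cf_q (log_a z) (log_b z) n)
       / (2 * PI / ((1 + sqrt (1 - z)) ^ 2 / z) ^ (2 * n + 1)))
    1.
Proof.
  have hs0 : 0 < sqrt (1 - z) by (apply sqrt_lt_R0; lra).
  have hs : sqrt (1 - z) * sqrt (1 - z) = 1 - z by (apply sqrt_sqrt; lra).
  have hs1 : sqrt (1 - z) <> 1.
  { intros h. rewrite h in hs. apply hz0. lra. }
  split.
  - exact (part1 z (sqrt (1 - z)) hz1 hs0 hs hs1).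
  - exact (part2 z (sqrt (1 - z)) hz1 hs0 hs hs1).
Qed.
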